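(* No finite subset of $T$ containing at least two points is full.
   Context: Let $X_1,X_2,X_3$ be pairwise disjoint nonempty sets and $\Omega=X_1\times X_2\times X_3$, with projections $\Pi_i:\Omega\to X_i$. A set $S\subset\Omega$ is good if every function $f:S\to\mathbb C$ can be written $f(w_1,w_2,w_3)=u_1(w_1)+u_2(w_2)+u_3(w_3)$ for all $(w_1,w_2,w_3)\in S$, for some functions $u_i:X_i\to\mathbb C$. A set $S$ is full if it is a maximal good subset of $\Pi_1S\times\Pi_2S\times\Pi_3S$. Construction: fix pairwise distinct elements $x_1,y_1,\alpha_{5k-4},\alpha_{5k-1}$ ($k\ge1$) of $X_1$; pairwise distinct elements $x_2,y_2,\alpha_{5k-3},\alpha_{5k}$ ($k\ge1$) of $X_2$; pairwise distinct elements $x_3,z_3,\alpha_{5k-2}$ ($k\ge1$) of $X_3$. Set the convention $\alpha_{-3}:=y_2$, $\alpha_{-2}:=z_3$. Define $a_1=(x_1,x_2,x_3)$, $a_2=(y_1,y_2,x_3)$, $a_3=(y_1,x_2,z_3)$ and for $n\ge1$: $a_{5n-1}=(\alpha_{5n-4},\alpha_{5n-3},\alpha_{5n-2})$, $a_{5n}=(\alpha_{5n-1},\alpha_{5n},\alpha_{5n-2})$, $a_{5n+1}=(\alpha_{5n-4},\alpha_{5n},\alpha_{5n-7})$, $a_{5n+2}=(\alpha_{5n-1},\alpha_{5n-3},x_3)$, $a_{5n+3}=(x_1,\alpha_{5n-8},\alpha_{5n-2})$. Let $T=\{a_i:i\ge1\}$. *)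

(* Defs.v *)
(* Complex numbers as the additive group R*R (only addition is used). *)
From Stdlib Require Import Reals List.
Open Scope R_scope.

Definition Cplx : Type := (R * R)%type.
Definition Cadd (z w : Cplx) : Cplx := (fst z + fst w, snd z + snd w).

Section Defs.
Context {X1 X2 X3 : Type}.
Definition Omega : Type := (X1 * X2 * X3)%type.
Definition P1 (w : Omega) : X1 := fst (fst w).
Definition P2 (w : Omega) : X2 := snd (fst w).
Definition P3 (w : Omega) : X3 := snd w.

Definition good (S : Omega -> Prop) : Prop :=
  forall f : Omega -> Cplx, exists (u1 : X1 -> Cplx) (u2 : X2 -> Cplx) (u3 : X3 -> Cplx),
    forall w, S w -> f w = Cadd (Cadd (u1 (P1 w)) (u2 (P2 w))) (u3 (P3 w)).

Definition box (S : Omega -> Prop) (w : Omega) : Prop :=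
  (exists v, S v /\ P1 v = P1 w) /\ (exists v, S v /\ P2 v = P2 w) /\
  (exists v, S v /\ P3 v = P3 w).

Definition full (S : Omega -> Prop) : Prop :=
  good S /\
  (forall S' : Omega -> Prop,
     (forall w, S w -> S' w) -> (forall w, S' w -> box S w) -> good S' ->
     forall w, S' w -> S w).

Definition finite_set (S : Omega -> Prop) : Prop :=
  exists l : list Omega, forall w, S w <-> In w l.
End Defs.

(* For k >= 1:
   A k = alpha_{5k-4}, D k = alpha_{5k-1} in X1;
   B k = alpha_{5k-3}, E k = alpha_{5k}   in X2;
   C k = alpha_{5k-2}                     in X3.
   The conventions alpha_{-3} = y2, alpha_{-2} = z3 are Bx/Cx at index 0. *)
Definition Bx {X2 : Type} (y2 : X2) (B : nat -> X2) (n : nat) : X2 :=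
  match n with O => y2 | _ => B n end.
Definition Cx {X3 : Type} (z3 : X3) (C : nat -> X3) (n : nat) : X3 :=
  match n with O => z3 | _ => C n end.

Definition distinct_data {X1 X2 X3 : Type}
  (x1 y1 : X1) (A D : nat -> X1) (x2 y2 : X2) (B E : nat -> X2)
  (x3 z3 : X3) (C : nat -> X3) : Prop :=
  x1 <> y1 /\
  (forall k, (1 <= k)%nat -> A k <> x1 /\ A k <> y1 /\ D k <> x1 /\ D k <> y1) /\
  (forall k l, (1 <= k)%nat -> (1 <= l)%nat ->
     (A k = A l -> k = l) /\ (D k = D l -> k = l) /\ A k <> D l) /\
  x2 <> y2 /\
  (forall k, (1 <= k)%nat -> B k <> x2 /\ B k <> y2 /\ E k <> x2 /\ E k <> y2) /\
  (forall k l, (1 <= k)%nat -> (1 <= l)%nat ->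
     (B k = B l -> k = l) /\ (E k = E l -> k = l) /\ B k <> E l) /\
  x3 <> z3 /\
  (forall k, (1 <= k)%nat -> C k <> x3 /\ C k <> z3) /\
  (forall k l, (1 <= k)%nat -> (1 <= l)%nat -> C k = C l -> k = l).

Definition Tset {X1 X2 X3 : Type}
  (x1 y1 : X1) (A D : nat -> X1) (x2 y2 : X2) (B E : nat -> X2)
  (x3 z3 : X3) (C : nat -> X3) (w : X1 * X2 * X3) : Prop :=
  w = (x1, x2, x3) \/                                   (* a_1 *)
  w = (y1, y2, x3) \/                                   (* a_2 *)
  w = (y1, x2, z3) \/                                   (* a_3 *)
  exists n : nat, (1 <= n)%nat /\
   (w = (A n, B n, C n) \/                               (* a_{5n-1} *)
    w = (D n, E n, C n) \/                               (* a_{5n}   *)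
    w = (A n, E n, Cx z3 C (n - 1)) \/                   (* a_{5n+1}: alpha_{5n-7} *)
    w = (D n, B n, x3) \/                                (* a_{5n+2} *)
    w = (x1, Bx y2 B (n - 1), C n)).                     (* a_{5n+3}: alpha_{5n-8} *)

(* Main.v *)
Require Import Defs.
From Stdlib Require Import Reals List Lra Lia Classical ClassicalEpsilon.
Open Scope R_scope.

Definition indic {X : Type} (a : X) (x : X) : R :=
  if excluded_middle_informative (x = a) then 1 else 0.
Lemma ind_eq {X} (a : X) : indic a a = 1.
Proof. unfold indic; destruct excluded_middle_informative; congruence. Qed.
Lemma ind_neq {X} (a x : X) : x <> a -> indic a x = 0.
Proof. unfold indic; destruct excluded_middle_informative; congruence. Qed.

Lemma Cplx_eq (z w : Cplx) : fst z = fst w -> snd z = snd w -> z = w.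
Proof. destruct z, w; simpl; intros; subst; reflexivity. Qed.

Lemma extend_good {X1 X2 X3 : Type} (S : X1 * X2 * X3 -> Prop) p
  (d1 : X1 -> R) (d2 : X2 -> R) (d3 : X3 -> R) :
  good S -> (forall w, S w -> d1 (P1 w) + d2 (P2 w) + d3 (P3 w) = 0) ->
  d1 (P1 p) + d2 (P2 p) + d3 (P3 p) <> 0 ->
  good (fun w => S w \/ w = p).
Proof.
  intros HS Hd Hp f.
  destruct (HS f) as [u1 [u2 [u3 Hu]]].
  set (s := d1 (P1 p) + d2 (P2 p) + d3 (P3 p)) in *.
  set (U := Cadd (Cadd (u1 (P1 p)) (u2 (P2 p))) (u3 (P3 p))).
  set (t1 := (fst (f p) - fst U) / s).
  set (t2 := (snd (f p) - snd U) / s).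
  exists (fun x => Cadd (u1 x) (d1 x * t1, d1 x * t2)),
         (fun x => Cadd (u2 x) (d2 x * t1, d2 x * t2)),
         (fun x => Cadd (u3 x) (d3 x * t1, d3 x * t2)).
  intros w [Hw | ->].
  - rewrite (Hu w Hw). specialize (Hd w Hw).
    apply Cplx_eq; unfold Cadd; simpl.
    + assert (d1 (P1 w) * t1 + d2 (P2 w) * t1 + d3 (P3 w) * t1 = 0) by
        (rewrite <- !Rmult_plus_distr_r, Hd; ring). lra.
    + assert (d1 (P1 w) * t2 + d2 (P2 w) * t2 + d3 (P3 w) * t2 = 0) by
        (rewrite <- !Rmult_plus_distr_r, Hd; ring). lra.
  - assert (K1 : d1 (P1 p) * t1 + d2 (P2 p) * t1 + d3 (P3 p) * t1 = fst (f p) - fst U).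
    { rewrite <- !Rmult_plus_distr_r. fold s. unfold t1. field. exact Hp. }
    assert (K2 : d1 (P1 p) * t2 + d2 (P2 p) * t2 + d3 (P3 p) * t2 = snd (f p) - snd U).
    { rewrite <- !Rmult_plus_distr_r. fold s. unfold t2. field. exact Hp. }
    unfold U, Cadd in K1, K2; simpl in K1, K2.
    apply Cplx_eq; unfold Cadd; simpl; lra.
Qed.

Lemma not_full_of {X1 X2 X3 : Type} (S : X1 * X2 * X3 -> Prop) p
  (d1 : X1 -> R) (d2 : X2 -> R) (d3 : X3 -> R) :
  (forall w, S w -> d1 (P1 w) + d2 (P2 w) + d3 (P3 w) = 0) ->
  d1 (P1 p) + d2 (P2 p) + d3 (P3 p) <> 0 ->
  (exists v, S v /\ P1 v = P1 p) -> (exists v, S v /\ P2 v = P2 p) ->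
  (exists v, S v /\ P3 v = P3 p) -> ~ full S.
Proof.
  intros Hd Hp b1 b2 b3 [HS Hmax].
  assert (Hg := extend_good S p d1 d2 d3 HS Hd Hp).
  assert (S p).
  { apply (Hmax (fun w => S w \/ w = p)); auto.
    intros w [Hw | ->]. - repeat split; exists w; auto. - repeat split; auto. }
  apply Hp, Hd; auto.
Qed.

Lemma min_ex (P : nat -> Prop) : (exists n, P n) -> exists n, P n /\ forall m, (m < n)%nat -> ~ P m.
Proof.
  intros [n Hn]. revert Hn. induction n as [n IH] using (well_founded_induction Wf_nat.lt_wf).
  intros Hn. destruct (classic (exists m, (m < n)%nat /\ P m)) as [[m [Hm Pm]]|Hno].
  - exact (IH m Hm Pm).
  - exists n; split; auto. intros m Hm Pm; apply Hno; eauto.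
Qed.

Lemma bound_list {T : Type} (G : nat -> T -> Prop) (l : list T) :
  (forall w, In w l -> exists n, G n w) ->
  exists N, forall w, In w l -> exists n, (n <= N)%nat /\ G n w.
Proof.
  induction l as [|a l IH]; intros H.
  - exists O; intros w [].
  - destruct IH as [N HN]. { intros; apply H; simpl; auto. }
    destruct (H a (or_introl eq_refl)) as [n Hn].
    exists (Nat.max N n). intros w [<-|Hw].
    + exists n; split; [lia|auto].
    + destruct (HN w Hw) as [k [Hk Gk]]; exists k; split; [lia|auto].
Qed.

Definition Grp {X1 X2 X3 : Type}
  (x1 y1 : X1) (A D : nat -> X1) (x2 y2 : X2) (B E : nat -> X2)
  (x3 z3 : X3) (C : nat -> X3) (n : nat) (w : X1 * X2 * X3) : Prop :=
  (n = O /\ (w = (x1,x2,x3) \/ w = (y1,y2,x3) \/ w = (y1,x2,z3) \/ w = (x1,y2,C 1%nat))) \/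
  ((1 <= n)%nat /\ (w = (A n, B n, C n) \/ w = (D n, E n, C n) \/
     w = (A n, E n, Cx z3 C (n-1)) \/ w = (D n, B n, x3) \/ w = (x1, B n, C (n+1)%nat))).

Lemma Tset_Grp {X1 X2 X3 : Type}
  (x1 y1 : X1) (A D : nat -> X1) (x2 y2 : X2) (B E : nat -> X2)
  (x3 z3 : X3) (C : nat -> X3) w :
  Tset x1 y1 A D x2 y2 B E x3 z3 C w -> exists n, Grp x1 y1 A D x2 y2 B E x3 z3 C n w.
Proof.
  unfold Tset, Grp.
  intros [H|[H|[H|[n [Hn [H|[H|[H|[H|H]]]]]]]]]; try (exists O; left; split; [reflexivity|]; tauto).
  all: try (exists n; right; split; [exact Hn|]; tauto).
  destruct n as [|[|m]]; [lia| |].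
  - exists O; left; split; [reflexivity|]. simpl in H. tauto.
  - exists (S m); right; split; [lia|]. do 4 right.
    rewrite H. simpl. replace (m - 0)%nat with m by lia. replace (m + 1)%nat with (S m) by lia.
    reflexivity.
Qed.

Ltac neq_core H :=
  first [ match goal with F : _ <> _ |- _ => exact (F H) end
        | match goal with F : forall k, (1<=k)%nat -> _ <> _ |- _ => refine (F _ _ H); lia end
        | match goal with F : forall k j, (1<=k)%nat -> (1<=j)%nat -> _ <> _ |- _ => refine (F _ _ _ _ H); lia end
        | match goal with F : forall k j, (1<=j)%nat -> j <> k -> _ <> _ |- _ => refine (F _ _ _ _ H); lia end
        | match goal with F : forall k, Cx _ _ k <> _ |- _ => exact (F _ H) end
        | match goal with F : forall k j, (1<=k)%nat -> (1<=j)%nat -> _ = _ -> k = j |- _ => apply F in H; lia end ].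

Theorem mainTheorem4 (X1 X2 X3 : Type)
  (x1 y1 : X1) (A D : nat -> X1) (x2 y2 : X2) (B E : nat -> X2)
  (x3 z3 : X3) (C : nat -> X3) :
  distinct_data x1 y1 A D x2 y2 B E x3 z3 C ->
  forall S : X1 * X2 * X3 -> Prop,
    (forall w, S w -> Tset x1 y1 A D x2 y2 B E x3 z3 C w) ->
    finite_set S ->
    (exists v w, S v /\ S w /\ v <> w) ->
    ~ full S.
Proof.
  intros Hdd S HT [l Hl] Hvw.
  destruct Hdd as (hx1y1 & H1 & H2 & hx2y2 & H3 & H4 & hx3z3 & H5 & H6).
  assert (hAx1 : forall k, (1 <= k)%nat -> A k <> x1) by (intros; edestruct H1 as (?&?&?&?); eauto).
  assert (hAy1 : forall k, (1 <= k)%nat -> A k <> y1) by (intros; edestruct H1 as (?&?&?&?); eauto).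
  assert (hDx1 : forall k, (1 <= k)%nat -> D k <> x1) by (intros; edestruct H1 as (?&?&?&?); eauto).
  assert (hDy1 : forall k, (1 <= k)%nat -> D k <> y1) by (intros; edestruct H1 as (?&?&?&?); eauto).
  assert (hAinj : forall k l, (1 <= k)%nat -> (1 <= l)%nat -> A k = A l -> k = l) by (intros k j Hk Hj; destruct (H2 k j Hk Hj) as (?&?&?); auto).
  assert (hDinj : forall k l, (1 <= k)%nat -> (1 <= l)%nat -> D k = D l -> k = l) by (intros k j Hk Hj; destruct (H2 k j Hk Hj) as (?&?&?); auto).
  assert (hAD : forall k l, (1 <= k)%nat -> (1 <= l)%nat -> A k <> D l) by (intros k j Hk Hj; destruct (H2 k j Hk Hj) as (?&?&?); auto).
  assert (hBx2 : forall k, (1 <= k)%nat -> B k <> x2) by (intros; edestruct H3 as (?&?&?&?); eauto).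
  assert (hBy2 : forall k, (1 <= k)%nat -> B k <> y2) by (intros; edestruct H3 as (?&?&?&?); eauto).
  assert (hEx2 : forall k, (1 <= k)%nat -> E k <> x2) by (intros; edestruct H3 as (?&?&?&?); eauto).
  assert (hEy2 : forall k, (1 <= k)%nat -> E k <> y2) by (intros; edestruct H3 as (?&?&?&?); eauto).
  assert (hBinj : forall k l, (1 <= k)%nat -> (1 <= l)%nat -> B k = B l -> k = l) by (intros k j Hk Hj; destruct (H4 k j Hk Hj) as (?&?&?); auto).
  assert (hEinj : forall k l, (1 <= k)%nat -> (1 <= l)%nat -> E k = E l -> k = l) by (intros k j Hk Hj; destruct (H4 k j Hk Hj) as (?&?&?); auto).
  assert (hBE : forall k l, (1 <= k)%nat -> (1 <= l)%nat -> B k <> E l) by (intros k j Hk Hj; destruct (H4 k j Hk Hj) as (?&?&?); auto).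
  assert (hCx3 : forall k, (1 <= k)%nat -> C k <> x3) by (intros; edestruct H5 as (?&?); eauto).
  assert (hCz3 : forall k, (1 <= k)%nat -> C k <> z3) by (intros; edestruct H5 as (?&?); eauto).
  assert (hCinj : forall k l, (1 <= k)%nat -> (1 <= l)%nat -> C k = C l -> k = l) by (intros k j Hk Hj; apply H6; auto).
  assert (hCxC : forall k j, (1 <= j)%nat -> j <> k -> Cx z3 C k <> C j).
  { intros k j Hj Hjk. destruct k; simpl.
    - intro H; symmetry in H; exact (hCz3 j Hj H).
    - intro H; apply hCinj in H; lia. }
  assert (hCxx3 : forall k, Cx z3 C k <> x3).
  { intros k. destruct k; simpl. - auto. - apply hCx3; lia. }
  clear H1 H2 H3 H4 H5 H6.
  Ltac neq := let H := fresh in intro H; first [ neq_core H | symmetry in H; neq_core H ].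
  Ltac evind := repeat match goal with |- context [indic ?a ?x] =>
     first [ rewrite (ind_neq a x) by neq | rewrite (ind_eq a)
           | replace x with a by (f_equal; lia); rewrite (ind_eq a) ] end.
  Ltac solve_d := unfold P1, P2, P3 in *; cbn [fst snd] in *; evind; lra.
  Ltac solve_nz := unfold P1, P2, P3 in *; cbn [fst snd] in *; evind; intro; lra.
  set (G := Grp x1 y1 A D x2 y2 B E x3 z3 C).
  assert (Hb : exists N, forall w, S w -> exists n, (n <= N)%nat /\ G n w).
  { destruct (bound_list G l) as [N HN].
    - intros w Hw. apply Tset_Grp, HT, Hl, Hw.
    - exists N. intros w Hw. apply HN, Hl, Hw. }
  destruct (min_ex _ Hb) as [N [HN Hmin]].
  assert (Hk : exists k, S k /\ G N k).
  { destruct Hvw as [v [w [Hv _]]].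
    destruct N as [|N'].
    - destruct (HN v Hv) as [n [Hn Gn]]. exists v. replace O with n by lia. auto.
    - apply NNPP; intro Hno. apply (Hmin N'); [lia|].
      intros u Hu. destruct (HN u Hu) as [n [Hn Gn]]. exists n; split; auto.
      destruct (Nat.eq_dec n (Datatypes.S N')) as [->|]; [|lia].
      exfalso; apply Hno; eauto. }
  clear Hmin Hb Hl l.
  destruct (Nat.eq_dec N 0) as [->|HN1].
  -
    set (d1 := indic x1). set (d2 := fun x => - indic x2 x).
    set (d3 := fun x => indic z3 x - indic (C 1%nat) x).
    assert (Hf0 : forall w, S w -> w = (x1,x2,x3) \/ w = (y1,y2,x3) \/ w = (y1,x2,z3) \/ w = (x1,y2,C 1%nat)).
    { intros w Hw. destruct (HN w Hw) as [n [Hn [[_ Gn]|[Gn _]]]]; [exact Gn|lia]. }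
    assert (Hvan : forall w, S w -> d1 (P1 w) + d2 (P2 w) + d3 (P3 w) = 0).
    { intros w Hw. unfold d1, d2, d3. destruct (Hf0 w Hw) as [->|[->|[->| ->]]]; solve_d. }
    destruct Hvw as [v [w [Hv [Hw Hne]]]].
    Ltac box v w Hv Hw Ev Ew := first [ exists v; split; [exact Hv| rewrite Ev; reflexivity]
                                       | exists w; split; [exact Hw| rewrite Ew; reflexivity] ].
    Ltac tryp S p d1 d2 d3 Hvan v w Hv Hw Ev Ew :=
      apply (not_full_of S p d1 d2 d3); [exact Hvan | unfold d1, d2, d3; solve_nz
        | box v w Hv Hw Ev Ew | box v w Hv Hw Ev Ew | box v w Hv Hw Ev Ew].
    destruct (Hf0 v Hv) as [Ev|[Ev|[Ev|Ev]]]; destruct (Hf0 w Hw) as [Ew|[Ew|[Ew|Ew]]];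
      try (exfalso; apply Hne; congruence);
      first [ tryp S (x1,y2,x3) d1 d2 d3 Hvan v w Hv Hw Ev Ew
            | tryp S (x1,x2,z3) d1 d2 d3 Hvan v w Hv Hw Ev Ew
            | tryp S (x1,x2,C 1%nat) d1 d2 d3 Hvan v w Hv Hw Ev Ew
            | tryp S (y1,x2,x3) d1 d2 d3 Hvan v w Hv Hw Ev Ew ].
  -
    assert (Hlow : forall w m, G m w -> (m < N)%nat ->
      P1 w <> A N /\ P1 w <> D N /\ P2 w <> B N /\ P2 w <> E N /\ P3 w <> C (N+1)%nat).
    { intros w m Gm Hm. destruct Gm as [[Hm0 Hf]|[Hm1 Hf]];
      [destruct Hf as [->|[->|[->| ->]]] | destruct Hf as [->|[->|[->|[->| ->]]]]];
      unfold P1, P2, P3; cbn [fst snd]; repeat split; neq. }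
    assert (HfN : forall w, G N w -> w = (A N, B N, C N) \/ w = (D N, E N, C N) \/
       w = (A N, E N, Cx z3 C (N-1)) \/ w = (D N, B N, x3) \/ w = (x1, B N, C (N+1)%nat)).
    { intros w [[H0 _]|[_ Hf]]; [lia|exact Hf]. }
    assert (Hcase : forall w, S w -> G N w \/ exists m, (m < N)%nat /\ G m w).
    { intros w Hw. destruct (HN w Hw) as [m [Hm Gm]].
      destruct (Nat.eq_dec m N) as [->|]; [left; exact Gm|right; exists m; split; [lia|exact Gm]]. }
    set (e1 := fun x => indic (A N) x + indic (D N) x).
    set (e2 := fun x => - indic (B N) x - indic (E N) x).
    set (e3 := indic (C (N+1)%nat)).
    assert (HvanW : forall w, S w -> e1 (P1 w) + e2 (P2 w) + e3 (P3 w) = 0).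
    { intros w Hw. unfold e1, e2, e3. destruct (Hcase w Hw) as [Gw|[m [Hm Gm]]].
      - destruct (HfN w Gw) as [->|[->|[->|[->| ->]]]]; solve_d.
      - destruct (Hlow w m Gm Hm) as (a&b&c&d&e).
        rewrite (ind_neq _ _ a), (ind_neq _ _ b), (ind_neq _ _ c), (ind_neq _ _ d), (ind_neq _ _ e).
        lra. }
    destruct Hvw as [v [w [Hv [Hw Hne]]]].
    destruct (classic (S (x1, B N, C (N+1)%nat))) as [HW|HW].
    + assert (Hw' : exists w', S w' /\ w' <> (x1, B N, C (N+1)%nat)).
      { destruct (classic (v = (x1, B N, C (N+1)%nat))) as [Ev|Hv'].
        - exists w; split; auto. intro; apply Hne; congruence.
        - exists v; auto. }
      destruct Hw' as [w' [Hw'S Hw'W]].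
      assert (H3 : P3 w' <> C (N+1)%nat).
      { destruct (Hcase w' Hw'S) as [Gw|[m [Hm Gm]]].
        - destruct (HfN w' Gw) as [->|[->|[->|[->| ->]]]]; unfold P3; cbn [fst snd];
            [neq|neq|neq|neq|contradiction].
        - apply (Hlow w' m Gm Hm). }
      apply (not_full_of S (x1, B N, P3 w') e1 e2 e3 HvanW).
      * unfold e1, e2, e3.
        change (P3 (x1, B N, P3 w')) with (P3 w'). rewrite (ind_neq _ _ H3).
        unfold P1, P2; cbn [fst snd]. evind. intro; lra.
      * exists (x1, B N, C (N+1)%nat); split; [exact HW|reflexivity].
      * exists (x1, B N, C (N+1)%nat); split; [exact HW|reflexivity].
      * exists w'; split; [exact Hw'S|reflexivity].
    + destruct (classic (exists w0, S w0 /\ ~ G N w0)) as [[w0 [Hw0 Hn0]]|Hall].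
      * destruct (Hcase w0 Hw0) as [|[m [Hm Gm]]]; [contradiction|].
        destruct (Hlow w0 m Gm Hm) as (a&b&c&d&e).
        destruct Hk as [k [HkS Gk]].
        assert (Hk1 : e1 (P1 k) = 1).
        { unfold e1. destruct (HfN k Gk) as [->|[->|[->|[->| ->]]]]; [..|contradiction];
          unfold P1; cbn [fst snd]; evind; lra. }
        apply (not_full_of S (P1 k, P2 w0, P3 w0) e1 e2 e3 HvanW).
        -- change (P1 (P1 k, P2 w0, P3 w0)) with (P1 k).
           change (P2 (P1 k, P2 w0, P3 w0)) with (P2 w0).
           change (P3 (P1 k, P2 w0, P3 w0)) with (P3 w0).
           rewrite Hk1. unfold e2, e3.
           rewrite (ind_neq _ _ c), (ind_neq _ _ d), (ind_neq _ _ e). intro; lra.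
        -- exists k; split; [exact HkS|reflexivity].
        -- exists w0; split; [exact Hw0|reflexivity].
        -- exists w0; split; [exact Hw0|reflexivity].
      * assert (Hf : forall w, S w -> w = (A N, B N, C N) \/ w = (D N, E N, C N) \/
           w = (A N, E N, Cx z3 C (N-1)) \/ w = (D N, B N, x3)).
        { intros u Hu. assert (Gu : G N u) by (apply NNPP; intro; apply Hall; eauto).
          destruct (HfN u Gu) as [E'|[E'|[E'|[E'|E']]]]; [tauto|tauto|tauto|tauto|].
          subst; contradiction. }
        set (f1 := indic (A N)). set (f2 := indic (E N)).
        set (f3 := fun x => - indic (C N) x - 2 * indic (Cx z3 C (N-1)) x).
        assert (Hvan : forall w, S w -> f1 (P1 w) + f2 (P2 w) + f3 (P3 w) = 0).
        { intros u Hu. unfold f1, f2, f3. destruct (Hf u Hu) as [->|[->|[->| ->]]]; solve_d. }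
        destruct (Hf v Hv) as [Ev|[Ev|[Ev|Ev]]]; destruct (Hf w Hw) as [Ew|[Ew|[Ew|Ew]]];
          try (exfalso; apply Hne; congruence);
          first [ tryp S (A N, E N, C N) f1 f2 f3 Hvan v w Hv Hw Ev Ew
                | tryp S (D N, B N, C N) f1 f2 f3 Hvan v w Hv Hw Ev Ew
                | tryp S (D N, B N, Cx z3 C (N-1)) f1 f2 f3 Hvan v w Hv Hw Ev Ew ].
Qed.
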